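(* Let $q$ be prime, let $[[n,n-k,d]]_q$ be a non-degenerate stabilizer code, and let $M\in\mathbb{Z}^{k\times 2n}$ be an invariant form of it with maximal absolute entry $B$. Let $d^*$ be the integer distance of $M$, i.e. the minimum weight of a nonzero integer vector $e\in\mathbb{Z}^{2n}$ with $e\odot m=0$ over $\mathbb{Z}$ for every row $m$ of $M$; then $d\le d^*\le k$. For every prime $$p> B^{2(d^*-1)}\,\bigl(2(d^*-1)\bigr)^{d^*-1},$$ the code given by $M \bmod p$ has distance exactly $d^*$, so the distance cannot be further improved by embedding into more levels. In particular, the same conclusion holds for every prime $p> B^{2(k-1)}(2(k-1))^{k-1}$.
   Context: An $n$-qudit Pauli is represented by an exponent vector $(a|b)$ (over $\mathbb{Z}_r$ for $r$ prime, or over $\mathbb{Z}$). Symplectic product: $u\odot v=\sum_{l=1}^n (v_{z,l}u_{x,l}-v_{x,l}u_{z,l})$. Weight of $(a|b)$: number of $l$ with $(a_l,b_l)\ne(0,0)$. The distance of a code over $r$ levels with generator matrix $G$ is the minimum weight of a nonzero $e\in\mathbb{Z}_r^{2n}$ symplectically orthogonal mod $r$ to every row of $G$; non-degenerate means every non-identity stabilizer group element has weight at least $d$. An invariant form of a code with generator matrix $S$ over $\mathbb{Z}_q$ is an integer matrix $M\equiv S \pmod q$ whose rows have pairwise integer symplectic product $0$. *)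

(* Defs.v *)
From HB Require Import structures.
From mathcomp Require Import all_boot all_order all_algebra.
Set Implicit Arguments. Unset Strict Implicit. Unset Printing Implicit Defensive.
Import Order.TTheory GRing.Theory Num.Theory.
Local Open Scope ring_scope.

(* A Pauli exponent vector (a|b) on n qudits is a row vector of length n+n:
   column [lshift n l] holds a_l (x-part), column [rshift n l] holds b_l (z-part). *)

Definition sympl {R : pzRingType} {n : nat} (u v : 'rV[R]_(n + n)) : R :=
  \sum_(l < n) (v 0 (rshift n l) * u 0 (lshift n l) - v 0 (lshift n l) * u 0 (rshift n l)).

Definition weight {R : pzRingType} {n : nat} (u : 'rV[R]_(n + n)) : nat :=
  #|[set l : 'I_n | (u 0 (lshift n l) != 0) || (u 0 (rshift n l) != 0)]|.

Definition orth_rows {R : pzRingType} {k n : nat} (G : 'M[R]_(k, n + n))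
    (e : 'rV[R]_(n + n)) : Prop :=
  forall i : 'I_k, sympl e (row i G) = 0.

(* d is the distance of G: minimum weight of a nonzero e orthogonal to all rows.
   Over R = 'F_r this is the code distance; over R = int it is the integer distance. *)
Definition code_distance {R : pzRingType} {k n : nat} (G : 'M[R]_(k, n + n))
    (d : nat) : Prop :=
  (exists e : 'rV[R]_(n + n), [/\ e != 0, orth_rows G e & weight e = d]) /\
  (forall e : 'rV[R]_(n + n), e != 0 -> orth_rows G e -> (d <= weight e)%N).

Definition stabilizer_code {F : fieldType} {k n : nat} (S : 'M[F]_(k, n + n))
    (d : nat) : Prop :=
  [/\ forall i j : 'I_k, sympl (row i S) (row j S) = 0,
      row_free S & code_distance S d].

Definition nondegenerate_code {F : fieldType} {k n : nat} (S : 'M[F]_(k, n + n))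
    (d : nat) : Prop :=
  forall c : 'rV[F]_k, c *m S != 0 -> (d <= weight (c *m S))%N.

Definition mod_mx (p : nat) {k m : nat} (M : 'M[int]_(k, m)) : 'M['F_p]_(k, m) :=
  map_mx (fun z : int => z%:~R) M.

Definition invariant_form (q : nat) {k n : nat} (M : 'M[int]_(k, n + n))
    (S : 'M['F_q]_(k, n + n)) : Prop :=
  mod_mx q M = S /\ forall i j : 'I_k, sympl (row i M) (row j M) = 0.

Definition maxabs {k m : nat} (M : 'M[int]_(k, m)) : nat :=
  (\max_(i < k) \max_(j < m) `|M i j|%N)%N.

(* Main.v *)
Require Import Defs.
From HB Require Import structures.
From mathcomp Require Import all_boot all_order all_algebra.
From mathcomp Require Import ring zify.
Set Implicit Arguments. Unset Strict Implicit. Unset Printing Implicit Defensive.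
Import Order.TTheory GRing.Theory Num.Theory.

Section Had.
Local Open Scope ring_scope.

Definition norm2 {R : pzRingType} {m : nat} (u : 'rV[R]_m) : R :=
  \sum_(c < m) u 0 c ^+ 2.

Lemma mulmx_tr_norm2 (R : comPzRingType) m (u : 'rV[R]_m) :
  (u *m u^T) 0 0 = norm2 u.
Proof. rewrite !mxE; apply: eq_bigr => c _; by rewrite mxE expr2. Qed.

Lemma norm2_ge0 (R : realDomainType) m (u : 'rV[R]_m) : 0 <= norm2 u.
Proof. by apply: sumr_ge0 => c _; rewrite sqr_ge0. Qed.

Lemma norm2_eq0 (R : realDomainType) m (u : 'rV[R]_m) : norm2 u = 0 -> u = 0.
Proof.
move=> /psumr_eq0P H; apply/rowP => c; rewrite mxE.
by apply/eqP; rewrite -sqrf_eq0; apply/eqP; apply: H => // i _; rewrite sqr_ge0.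
Qed.

Lemma row_ord1 (R : Type) m (a : 'M[R]_(1, m)) : row 0 a = a.
Proof. by apply/matrixP => i c; rewrite !mxE (ord1 i). Qed.

Lemma gram_det (R : realFieldType) m j (A : 'M[R]_(j, m)) :
  0 <= \det (A *m A^T) <= \prod_(i < j) norm2 (row i A).
Proof.
elim: j A => [|j IH] A.
  by rewrite det_mx00 big_ord0 ler01 lexx.
rewrite -[A](@vsubmxK _ 1 j).
move: (usubmx _) (dsubmx _) => a A'.
have -> : \prod_(i < j.+1) norm2 (row i (col_mx a A')) =
     norm2 a * \prod_(i < j) norm2 (row i A').
  change (\prod_(i < 1 + j) norm2 (row i (col_mx a A')) = norm2 a * \prod_(i < j) norm2 (row i A')).
  rewrite big_split_ord big_ord1 rowKu row_ord1; congr (_ * _).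
  by apply: eq_bigr => i _; rewrite rowKd.
have prod_ge0 : 0 <= \prod_(i < j) norm2 (row i A').
  by apply: prodr_ge0 => i _; apply: norm2_ge0.
set G' := A' *m A'^T.
have [uG|nuG] := boolP (G' \in unitmx).
  set c := a *m A'^T *m invmx G'.
  set b := a - c *m A'.
  have bA : b *m A'^T = 0 by rewrite mulmxBl -mulmxA mulmxKV // subrr.
  have Ab : A' *m b^T = 0 by rewrite -[b^T]trmxK -[A' *m _]trmxK trmx_mul !trmxK bA trmx0.
  have E : col_mx a A' = block_mx 1%:M c 0 1%:M *m col_mx b A'.
    by rewrite mul_block_col !mul1mx mul0mx add0r subrK.
  have detE : \det (block_mx (1%:M : 'M[R]_1) c 0 (1%:M : 'M_j)) = 1.
    by rewrite det_ublock !det1 mulr1.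
  have -> : \det (col_mx a A' *m (col_mx a A')^T) = norm2 b * \det G'.
    rewrite E trmx_mul.
    set E' := block_mx _ _ _ _; set X := col_mx b A'.
    have -> : E' *m X *m (X^T *m E'^T) = E' *m (X *m X^T) *m E'^T by rewrite !mulmxA.
    rewrite !det_mulmx det_tr detE mul1r mulr1.
    rewrite tr_col_mx mul_col_row bA Ab det_ublock det_mx11 mulmx_tr_norm2.
    done.
  have nab : norm2 a = norm2 b + norm2 (c *m A').
    have -> : a = b + c *m A' by rewrite subrK.
    have h1 : b *m (c *m A')^T = 0 by rewrite trmx_mul mulmxA bA mul0mx.
    have h2 : c *m A' *m b^T = 0 by rewrite -mulmxA Ab mulmx0.
    by rewrite -!mulmx_tr_norm2 linearD /= mulmxDl !mulmxDr h1 h2 addr0 add0r mxE.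
  have nb0 := norm2_ge0 b.
  case/andP: (IH A') => d0 dle.
  rewrite mulr_ge0 //=.
  apply: ler_pM => //.
  by rewrite nab lerDl norm2_ge0.
have -> : \det (col_mx a A' *m (col_mx a A')^T) = 0.
  have kn : kermx G' != 0 by rewrite kermx_eq0 row_free_unit.
  case: (pickP (fun i => row i (kermx G') != 0)) => [i nx|H]; last first.
    case/eqP: kn; apply/row_matrixP => i; rewrite row0.
    by move: (H i) => /= /negbFE/eqP.
  set x := row i (kermx G') in nx.
  have xG : x *m G' = 0 by rewrite /x -row_mul mulmx_ker row0.
  have xA : x *m A' = 0.
    apply: norm2_eq0; rewrite -mulmx_tr_norm2 trmx_mul mulmxA.
    by rewrite -(mulmxA x) xG mul0mx mxE.
  apply/eqP; apply: contraNT nx => dn.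
  have uX : col_mx a A' *m (col_mx a A')^T \in unitmx by rewrite unitmxE unitfE.
  have y0 : (row_mx (0 : 'rV[R]_1) x) *m (col_mx a A' *m (col_mx a A')^T) = 0.
    by rewrite mulmxA mul_row_col mul0mx add0r xA !mul0mx.
  have : row_mx (0 : 'rV[R]_1) x = 0.
    by rewrite -[row_mx _ _](mulmxK uX) y0 mul0mx.
  by move/eqP; rewrite row_mx_eq0 => /andP[_ ->].
by rewrite lexx /= mulr_ge0 // norm2_ge0.
Qed.

End Had.

Section Pauli.
Local Open Scope ring_scope.
Variable R : comNzRingType.
Variables (n k t : nat).
Implicit Types (M : 'M[R]_(k, n + n)) (f : 'I_t -> 'I_n).

Definition Amat M f : 'M[R]_(t + t, k) :=
  col_mx (\matrix_(j < t, i < k) M i (rshift n (f j)))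
         (\matrix_(j < t, i < k) - M i (lshift n (f j))).

Definition restr f (e : 'rV[R]_(n + n)) : 'rV[R]_(t + t) :=
  row_mx (\row_(j < t) e 0 (lshift n (f j))) (\row_(j < t) e 0 (rshift n (f j))).

Definition ext f (y : 'rV[R]_(t + t)) : 'rV[R]_(n + n) :=
  row_mx (\row_(l < n) if [pick j | f j == l] is Some j then y 0 (lshift t j) else 0)
         (\row_(l < n) if [pick j | f j == l] is Some j then y 0 (rshift t j) else 0).

Lemma rV_split a b (u v : 'rV[R]_(a + b)) :
  (forall j, u 0 (lshift b j) = v 0 (lshift b j)) ->
  (forall j, u 0 (rshift a j) = v 0 (rshift a j)) -> u = v.
Proof.
move=> H1 H2; rewrite -[u]hsubmxK -[v]hsubmxK; congr row_mx; apply/rowP => j;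
  by rewrite !mxE.
Qed.

Definition imf f := [set f x | x in [set: 'I_t]].

Lemma sum_img f (F : 'I_n -> R) : injective f ->
  (forall l, l \notin imf f -> F l = 0) -> \sum_(l < n) F l = \sum_(j < t) F (f j).
Proof.
move=> inj H; rewrite (bigID (fun l => l \in imf f)) /= [X in _ + X]big1 ?addr0;
  last by move=> l /H.
rewrite big_imset /=; last by move=> x y _ _ /inj.
by apply: eq_bigl => j; rewrite in_setT.
Qed.

Lemma sympl_restr M f (e : 'rV[R]_(n + n)) : injective f ->
  (forall l, l \notin imf f -> e 0 (lshift n l) = 0 /\ e 0 (rshift n l) = 0) ->
  forall i, sympl e (row i M) = (restr f e *m Amat M f) 0 i.
Proof.
move=> inj supp i; rewrite /sympl (@sum_img f _ inj); last first.
  by move=> l /supp [-> ->]; rewrite !mulr0 subrr.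
rewrite mxE big_split_ord /= -big_split /=; apply: eq_bigr => j _.
by rewrite /restr /Amat row_mxEl row_mxEr col_mxEu col_mxEd !mxE; ring.
Qed.

Lemma ext_supp f y l : l \notin imf f ->
  (ext f y) 0 (lshift n l) = 0 /\ (ext f y) 0 (rshift n l) = 0.
Proof.
move=> Hl; rewrite /ext row_mxEl row_mxEr !mxE.
case: pickP => [j /eqP fj|//]; case/negP: Hl; rewrite -fj; apply: imset_f.
by rewrite in_setT.
Qed.

Lemma restr_ext f y : injective f -> restr f (ext f y) = y.
Proof.
move=> inj; apply: rV_split => j.
  rewrite /restr row_mxEl mxE /ext row_mxEl mxE.
  by case: pickP => [j' /eqP /inj -> //|/(_ j)]; rewrite eqxx.
rewrite /restr row_mxEr mxE /ext row_mxEr mxE.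
by case: pickP => [j' /eqP /inj -> //|/(_ j)]; rewrite eqxx.
Qed.

Lemma ext_sympl M f y : injective f ->
  forall i, sympl (ext f y) (row i M) = (y *m Amat M f) 0 i.
Proof.
move=> inj i; rewrite (sympl_restr _ inj) ?restr_ext //.
by move=> l; apply: ext_supp.
Qed.

Lemma restr0 f : restr f 0 = 0.
Proof. by apply: rV_split => j; rewrite /restr ?row_mxEl ?row_mxEr !mxE. Qed.

Lemma ext_neq0 f y : injective f -> y != 0 -> ext f y != 0.
Proof.
move=> inj; apply: contra => /eqP E; by rewrite -(restr_ext y inj) E restr0.
Qed.

Lemma weight_sub (e : 'rV[R]_(n + n)) (T : {set 'I_n}) :
  (forall l, l \notin T -> e 0 (lshift n l) = 0 /\ e 0 (rshift n l) = 0) ->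
  (weight e <= #|T|)%N.
Proof.
move=> H; apply: subset_leq_card; apply/subsetP => l; rewrite inE.
by apply: contraLR => /H [-> ->]; rewrite eqxx.
Qed.

Lemma ext_weight f y : (weight (ext f y) <= t)%N.
Proof.
apply: leq_trans (weight_sub (T := imf f) _) _; first by move=> l; apply: ext_supp.
by apply: leq_trans (leq_imset_card _ _) _; rewrite cardsT card_ord.
Qed.

Lemma restr_neq0 f (e : 'rV[R]_(n + n)) :
  (forall l, l \notin imf f -> e 0 (lshift n l) = 0 /\ e 0 (rshift n l) = 0) ->
  e != 0 -> restr f e != 0.
Proof.
move=> supp; apply: contra => /eqP E; apply/eqP.
have H : forall l, e 0 (lshift n l) = 0 /\ e 0 (rshift n l) = 0.
  move=> l; have [/imsetP [j _ ->]|/supp //] := boolP (l \in imf f).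
  have := congr1 (fun v : 'rV[R]_(t + t) => v 0 (lshift t j)) E; have := congr1 (fun v : 'rV[R]_(t + t) => v 0 (rshift t j)) E.
  by rewrite /restr row_mxEl row_mxEr !mxE => -> ->.
by apply: rV_split => l; rewrite mxE; case: (H l).
Qed.

End Pauli.

Section Maps.
Local Open Scope ring_scope.
Variables (R S : comNzRingType) (g : {rmorphism R -> S}).

Lemma sympl_map n (u v : 'rV[R]_(n + n)) :
  sympl (map_mx g u) (map_mx g v) = g (sympl u v).
Proof.
rewrite /sympl rmorph_sum; apply: eq_bigr => l _.
by rewrite !mxE rmorphB !rmorphM.
Qed.

Lemma orth_map k n (M : 'M[R]_(k, n + n)) e :
  orth_rows M e -> orth_rows (map_mx g M) (map_mx g e).
Proof. by move=> H i; rewrite -map_row sympl_map H rmorph0. Qed.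

Lemma weight_map n (e : 'rV[R]_(n + n)) : (weight (map_mx g e) <= weight e)%N.
Proof.
apply: subset_leq_card; apply/subsetP => l; rewrite !inE !mxE.
by apply: contraLR; rewrite !negb_or !negbK => /andP[/eqP -> /eqP ->]; rewrite rmorph0 eqxx.
Qed.

End Maps.

Section Ker.
Local Open Scope ring_scope.

Lemma ker_vec (F : fieldType) m n (A : 'M[F]_(m, n)) :
  ~~ row_free A -> exists x : 'rV[F]_m, x != 0 /\ x *m A = 0.
Proof.
rewrite -kermx_eq0 => kn.
case: (pickP (fun i => row i (kermx A) != 0)) => [i nx|H]; last first.
  case/eqP: kn; apply/row_matrixP => i; rewrite row0.
  by move: (H i) => /= /negbFE/eqP.
by exists (row i (kermx A)); split => //; rewrite -row_mul mulmx_ker row0.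
Qed.

Lemma int_ker a b (Z : 'M[int]_(a, b)) :
  ~~ row_free (map_mx (fun z : int => z%:~R) Z : 'M[rat]_(a, b)) ->
  exists z : 'rV[int]_a, z != 0 /\ z *m Z = 0.
Proof.
case/ker_vec => y [y0 yZ].
set D := \prod_(c < a) denq (y 0 c).
pose z := \row_(c < a) (numq (y 0 c) * \prod_(c' < a | c' != c) denq (y 0 c')).
have zy : map_mx (fun z : int => z%:~R) z = (D%:~R : rat) *: y.
  apply/rowP => c; rewrite !mxE /D [in RHS](bigD1 c) //= !intrM.
  have dn : (denq (y 0 c))%:~R != 0 :> rat by rewrite intr_eq0 denq_neq0.
  have hr := esym (divq_num_den (y 0 c)).
  move: dn hr; set r := y 0 c; set N := numq r; set Dn := denq r => dn ->.
  by field.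
have D0 : (D%:~R : rat) != 0.
  by rewrite intr_eq0 /D; apply/lt0r_neq0/prodr_gt0 => c _; rewrite denq_gt0.
exists z; split.
  apply: contra y0 => /eqP z0.
  by move: zy; rewrite z0 map_mx0 => /esym/eqP; rewrite scalemx_eq0 (negbTE D0).
have H : map_mx (fun z : int => z%:~R : rat) (z *m Z) = 0.
  by rewrite map_mxM zy -scalemxAl yZ scaler0.
apply/matrixP => i j; have := congr1 (fun X : 'M[rat]_(1, b) => X i j) H.
by rewrite !mxE => /eqP; rewrite intr_eq0 => /eqP.
Qed.
End Ker.

Section Desc.
Local Open Scope ring_scope.

Lemma Fp_intr_eq0 p (z : int) : prime p -> ((z%:~R : 'F_p) == 0) = (p %| z)%Z.
Proof.
move=> pp; rewrite dvdzE /=.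
rewrite {1}[z]intEsign intrM mulf_eq0 rmorph_sign signr_eq0 /=.
by rewrite (dvdn_pcharf (pchar_Fp pp)).
Qed.

Lemma sympl_scale n (a : int) (u v : 'rV[int]_(n + n)) :
  sympl (a *: u) v = a * sympl u v.
Proof. rewrite /sympl mulr_sumr; apply: eq_bigr => l _; rewrite !mxE; ring. Qed.

Lemma weight_scale n (a : int) (u : 'rV[int]_(n + n)) : a != 0 ->
  weight (a *: u) = weight u.
Proof.
move=> a0; apply: eq_card => l; rewrite !inE !mxE !mulf_eq0 (negbTE a0) //.
Qed.

Definition sumabs m (e : 'rV[int]_m) : nat := \sum_(c < m) absz (e ord0 c).

Lemma sumabs_gt0 m (e : 'rV[int]_m) : e != 0 -> (0 < sumabs e)%N.
Proof.
move=> e0; case: (pickP (fun c => e 0 c != 0)) => [c ec|H]; last first.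
  by case/eqP: e0; apply/rowP => c; move: (H c) => /= /negbFE/eqP ->; rewrite mxE.
rewrite /sumabs (bigD1 c) //=; apply: leq_trans (leq_addr _ _).
by rewrite absz_gt0.
Qed.

Lemma descent k n (M : 'M[int]_(k, n + n)) d p : (1 < p)%N ->
  code_distance M d -> exists e : 'rV[int]_(n + n),
    [/\ e != 0, orth_rows M e, weight e = d & exists c, ~~ (p %| e ord0 c)%Z].
Proof.
move=> p1 [[e0 [e00 o0 w0]] _].
suff H : forall N (e : 'rV[int]_(n + n)), (sumabs e <= N)%N -> e != 0 ->
   orth_rows M e -> weight e = d -> exists e : 'rV[int]_(n + n),
    [/\ e != 0, orth_rows M e, weight e = d & exists c, ~~ (p %| e ord0 c)%Z].
  exact: (H _ e0 (leqnn _)).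
elim=> [|N IH] e Hs e0' oe we.
  by have := sumabs_gt0 e0'; rewrite lt0n -leqn0 Hs.
case: (pickP (fun c => ~~ (p %| e ord0 c)%Z)) => [c ec|Hd].
  by exists e; split => //; exists c.
have dv : forall c, (p %| e ord0 c)%Z by move=> c; move: (Hd c) => /= /negbFE.
pose e' := \row_c ((e ord0 c) %/ p)%Z.
have p0 : (p%:Z) != 0 by rewrite -lt0n ltnW.
have he : e = p%:Z *: e'.
  by apply/rowP => c; rewrite !mxE mulrC divzK.
have e'0 : e' != 0 by apply: contra e0' => /eqP z; rewrite he z scaler0.
apply: (IH e') => //.
- rewrite -ltnS; apply: leq_trans Hs; rewrite he /sumabs.
  have -> : \sum_(c < n + n) absz ((p%:Z *: e') ord0 c) = (p * sumabs e')%N.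
    by rewrite /sumabs big_distrr; apply: eq_bigr => c _; rewrite mxE abszM.
  by apply: ltn_Pmull => //; apply: sumabs_gt0.
- move=> i; move: (oe i); rewrite he sympl_scale => /eqP.
  by rewrite mulf_eq0 (negbTE p0) => /eqP.
- by rewrite -we he weight_scale.
Qed.

End Desc.

Lemma arith t d B D p : (0 < t)%N -> (t <= d)%N ->
  (D ^ 2 <= ((t + t) * B ^ 2) ^ (t + t))%N ->
  (B ^ (2 * d) * (2 * d) ^ d < p)%N -> (D < p)%N.
Proof.
move=> t0 td HD Hp.
have E : (((t + t) * B ^ 2) ^ (t + t) = ((t + t) ^ t * B ^ (2 * t)) ^ 2)%N.
  rewrite !expnMn -!expnM; congr (_ * _); first by rewrite muln2 addnn.
  by rewrite -expnD; f_equal; lia.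
have Hx : ((t + t) ^ t * B ^ (2 * t) <= B ^ (2 * d) * (2 * d) ^ d)%N.
  rewrite mulnC; apply: leq_mul.
    case: B {HD E Hp} => [|B]; first by rewrite exp0n // muln_gt0.
    by apply: leq_pexp2l => //; rewrite leq_mul2l td orbT.
  apply: (@leq_trans ((2 * d) ^ t)).
    by rewrite leq_exp2r //; lia.
  by apply: leq_pexp2l => //; lia.
have : (D ^ 2 < p ^ 2)%N.
  by apply: (leq_ltn_trans HD); rewrite E ltn_exp2r // (leq_ltn_trans Hx).
by rewrite ltn_exp2r.
Qed.


Section Low.
Local Open Scope ring_scope.

Lemma map_Amat (R S : comNzRingType) (g : {rmorphism R -> S}) k n t
   (M : 'M[R]_(k, n + n)) (f : 'I_t -> 'I_n) :
  map_mx g (Amat M f) = Amat (map_mx g M) f.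
Proof.
rewrite /Amat map_col_mx; congr col_mx; apply/matrixP => j i; by rewrite !mxE ?rmorphN.
Qed.

Lemma Amat_bound k n t (M : 'M[int]_(k, n + n)) (f : 'I_t -> 'I_n) c i :
  (`|Amat M f c i| <= maxabs M)%N.
Proof.
have bM : forall i j, (`|M i j| <= maxabs M)%N.
  move=> i' j; apply: leq_trans (leq_bigmax (F := fun j => `|M i' j|%N) j) _.
  exact: (leq_bigmax (F := fun i => \max_(j < n + n) `|M i j|%N) i').
rewrite -[c]splitK; case: (split c) => j /=.
  by rewrite /Amat col_mxEu mxE.
by rewrite /Amat col_mxEd mxE abszN.
Qed.

Lemma sq_absz (x : int) : x ^+ 2 = ((`|x| ^ 2)%N)%:Z.
Proof. by rewrite -abszX gez0_abs // sqr_ge0. Qed.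


Lemma lowbound k n (M : 'M[int]_(k, n + n)) dstar d' p : prime p ->
  code_distance M dstar -> (dstar - 1 <= d')%N ->
  (maxabs M ^ (2 * d') * (2 * d') ^ d' < p)%N ->
  forall e : 'rV['F_p]_(n + n), e != 0 -> orth_rows (mod_mx p M) e ->
  (dstar <= weight e)%N.
Proof.
move=> pp [_ cdmin] hd hp e e0 oe.
rewrite leqNgt; apply/negP => wlt.
set T := [set l : 'I_n | (e 0 (lshift n l) != 0) || (e 0 (rshift n l) != 0)].
have wT : weight e = #|T| by [].
pose f := (@enum_val _ (mem T)) : 'I_#|T| -> 'I_n.
have inj : injective f := @enum_val_inj _ _.
have notT : forall l, l \notin T -> e 0 (lshift n l) = 0 /\ e 0 (rshift n l) = 0.
  by move=> l; rewrite inE negb_or => /andP[/negPn/eqP -> /negPn/eqP ->].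
have supp : forall l, l \notin imf f -> e 0 (lshift n l) = 0 /\ e 0 (rshift n l) = 0.
  move=> l Hl; apply: notT; apply: contra Hl => lT.
  by apply/imsetP; exists (enum_rank_in lT l); rewrite ?in_setT // /f enum_rankK_in.
have tpos : (0 < #|T|)%N.
  rewrite lt0n; apply/negP => /eqP /cards0_eq T0; case/negP: e0; apply/eqP.
  by apply: rV_split => l; rewrite mxE; case: (notT l); rewrite ?T0 ?inE.
set y := restr f e.
have y0 : y != 0 := restr_neq0 supp e0.
have yA : y *m Amat (mod_mx p M) f = 0.
  by apply/rowP => i; rewrite [RHS]mxE -sympl_restr //; apply: oe.
pose Ar := map_mx (fun z : int => z%:~R : rat) (Amat M f).
have rf : row_free Ar.
  apply/negPn/negP => /int_ker [z [z0 zA]].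
  have oz : orth_rows M (ext f z) by move=> i; rewrite ext_sympl // zA mxE.
  have := cdmin _ (ext_neq0 inj z0) oz.
  move=> /leq_trans /(_ (ext_weight f z)); rewrite -wT => /leq_ltn_trans /(_ wlt).
  by rewrite ltnn.
have rfT : row_full Ar^T by rewrite /row_full mxrank_tr.
have ug := fullrowsub_unit rfT.
set g := fullrankfun rfT in ug.
pose C := colsub g (Amat M f).
have uC : map_mx (fun z : int => z%:~R : rat) C \in unitmx.
  by rewrite -unitmx_tr /C map_mxsub trmx_mxsub.
have dC : \det C != 0.
  by move: uC; rewrite unitmxE det_map_mx unitfE intr_eq0.
have Hint : (\det C) ^+ 2 <= \prod_(i < #|T| + #|T|) norm2 (row i C).
  have := gram_det (map_mx (fun z : int => z%:~R : rat) C) => /andP [_].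
  rewrite det_mulmx det_tr det_map_mx -expr2.
  have -> : \prod_(i < #|T| + #|T|) norm2 (row i (map_mx (fun z : int => z%:~R : rat) C))
      = (\prod_(i < #|T| + #|T|) norm2 (row i C))%:~R.
    rewrite rmorph_prod; apply: eq_bigr => i _; rewrite /norm2 rmorph_sum.
    by apply: eq_bigr => c _; rewrite !mxE rmorphXn.
  by rewrite -rmorphXn ler_int.
have Hnat : (`|\det C| ^ 2 <= ((#|T| + #|T|) * maxabs M ^ 2) ^ (#|T| + #|T|))%N.
  rewrite -lez_nat -sq_absz (le_trans Hint) //.
  have Hrow : forall i, 0 <= norm2 (row i C) <= ((#|T| + #|T|) * maxabs M ^ 2)%N%:Z.
    move=> i; rewrite norm2_ge0 /= /norm2.
    apply: (@le_trans _ _ (\sum_(c < #|T| + #|T|) ((maxabs M ^ 2)%N)%:Z)).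
      apply: ler_sum => c _; rewrite mxE sq_absz lez_nat leq_exp2r // /C mxE.
      exact: Amat_bound.
    by rewrite sumr_const card_ord -!natz -mulrnA mulnC.
  have Hp := ler_prod (I := 'I_(#|T| + #|T|)) (P := xpredT)
    (E1 := fun i => norm2 (row i C)) (E2 := fun _ => (((#|T| + #|T|) * maxabs M ^ 2)%N)%:Z)
    (index_enum _) (fun i _ => Hrow i).
  apply: le_trans Hp _.
  by rewrite prodr_const card_ord -!natz natrX.
have Dp : (`|\det C| < p)%N.
  apply: (arith tpos _ Hnat hp); move: wlt hd; rewrite wT; lia.
have Cp : map_mx (fun z : int => z%:~R : 'F_p) C \in unitmx.
  rewrite unitmxE det_map_mx unitfE Fp_intr_eq0 // dvdzE /=.
  apply/negP => /(dvdn_leq _); rewrite absz_gt0 dC => /(_ isT).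
  by rewrite leqNgt Dp.
have yC : y *m map_mx (fun z : int => z%:~R : 'F_p) C = 0.
  rewrite /C map_mxsub mulmx_colsub (map_Amat _ M f) yA.
  by apply/matrixP => i j; rewrite !mxE.
by case/negP: y0; rewrite -[y](mulmxK Cp) yC mul0mx.
Qed.

End Low.

Lemma existence k n (M : 'M[int]_(k, n + n)) dstar d' p : prime p ->
  code_distance M dstar -> (dstar - 1 <= d')%N ->
  (maxabs M ^ (2 * d') * (2 * d') ^ d' < p)%N ->
  code_distance (mod_mx p M) dstar.
Proof.
move=> pp cd hd hp.
have lb := lowbound pp cd hd hp.
have [e [e0 oe we [c ec]]] := descent (prime_gt1 pp) cd.
split; last by move=> e'; apply: lb.
exists (mod_mx p e); split.
- apply/eqP => /matrixP /(_ ord0 c); rewrite !mxE => /eqP.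
  by rewrite Fp_intr_eq0 // (negbTE ec).
- exact: orth_map.
- apply/eqP; rewrite eqn_leq -{1}we weight_map /= lb //.
    apply/eqP => /matrixP /(_ ord0 c); rewrite !mxE => /eqP.
    by rewrite Fp_intr_eq0 // (negbTE ec).
  exact: orth_map.
Qed.

Theorem corollary2 (q n k d : nat) (S : 'M['F_q]_(k, n + n))
    (M : 'M[int]_(k, n + n)) (dstar : nat) :
  prime q -> (0 < k)%N ->
  stabilizer_code S d -> nondegenerate_code S d ->
  invariant_form M S ->
  code_distance M dstar ->
  [/\ (d <= dstar)%N, (dstar <= k)%N,
      (forall p : nat, prime p ->
         (maxabs M ^ (2 * (dstar - 1)) * (2 * (dstar - 1)) ^ (dstar - 1) < p)%N ->
         code_distance (mod_mx p M) dstar)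
    & (forall p : nat, prime p ->
         (maxabs M ^ (2 * (k - 1)) * (2 * (k - 1)) ^ (k - 1) < p)%N ->
         code_distance (mod_mx p M) dstar)].
Proof.
move=> qp k0 [_ _ [_ Smin]] _ [HMS _] cdM.
have d1 : (d <= dstar)%N.
  have [e [e0 oe we [c ec]]] := descent (prime_gt1 qp) cdM.
  rewrite -we; apply: leq_trans (weight_map _ e).
  apply: Smin; last by rewrite -HMS; apply: orth_map.
  apply/eqP => /matrixP /(_ ord0 c); rewrite !mxE => /eqP.
  by rewrite Fp_intr_eq0 // (negbTE ec).
have d2 : (dstar <= k)%N.
  case: (leqP n k) => nk.
    case: cdM => [[e [_ _ <-]] _]; apply: leq_trans nk.
    by apply: leq_trans (max_card _) _; rewrite card_ord.
  pose f := @widen_ord k n (ltnW nk).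
  have inj : injective f by move=> x y /(congr1 val) /= /val_inj.
  have nrf : ~~ row_free (map_mx (fun z : int => z%:~R : rat) (Amat M f)).
    rewrite /row_free; apply/negP => /eqP r.
    by have := rank_leq_col (map_mx (fun z : int => z%:~R : rat) (Amat M f)); rewrite r; lia.
  have [z [z0 zA]] := int_ker nrf.
  have oz : orth_rows M (ext f z) by move=> i; rewrite ext_sympl // zA mxE.
  exact: leq_trans (cdM.2 _ (ext_neq0 inj z0) oz) (ext_weight f z).
split => // p pp hp.
  exact: existence pp cdM (leqnn _) hp.
by apply: existence pp cdM _ hp; rewrite leq_sub2r.
Qed.
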